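(* Let $H\in\mathbb{R}^{n\times d}$ have rank $h$, $\Sigma\in\mathbb{R}^{n\times n}$ symmetric positive definite, $\Gamma_0$ the empirical covariance of an initial ensemble, $C_0=H\Gamma_0H^\top$, $C_{i+1}=\Sigma-\Sigma(C_i+\Sigma)^{-1}\Sigma$, and $\widetilde{\mathcal{M}}_i=\Sigma(C_i+\Sigma)^{-1}$. With $\widetilde{\mathcal{P}},\widetilde{\mathcal{Q}},\widetilde{\mathcal{N}}$ as in the context, for every $i\ge0$ these are complementary spectral projectors of $\widetilde{\mathcal{M}}_i$: each commutes with $\widetilde{\mathcal{M}}_i$ and is idempotent, their pairwise products are zero, and $\widetilde{\mathcal{P}}+\widetilde{\mathcal{Q}}+\widetilde{\mathcal{N}}=I_n$.
   Context: Let $r$ be the number of positive eigenvalues of $C_0\tilde w=\tilde\delta\Sigma\tilde w$. Let $\tilde w_1,\dots,\tilde w_n$ be a basis of $\mathbb{R}^n$ with $\tilde w_k^\top\Sigma\tilde w_l$ equal to $1$ if $k=l$, $0$ otherwise, each a generalized eigenvector of $(C_i,\Sigma)$ for every $i\ge0$, with $\tilde w_1,\dots,\tilde w_r\in\mathsf{Ran}(\Sigma^{-1}H)$ having positive eigenvalues, $\tilde w_{r+1},\dots,\tilde w_h\in\mathsf{Ran}(\Sigma^{-1}H)$ eigenvalue zero, $\tilde w_{h+1},\dots,\tilde w_n\in\mathsf{Ker}(H^\top)$ eigenvalue zero. With $\widetilde W=[\tilde w_1,\dots,\tilde w_n]$ and $\widetilde W_{k:l}$ its columns $k$ through $l$: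 $\widetilde{\mathcal{P}}=\Sigma\widetilde W_{1:r}\widetilde W_{1:r}^\top$, $\widetilde{\mathcal{Q}}=\Sigma\widetilde W_{r+1:h}\widetilde W_{r+1:h}^\top$, $\widetilde{\mathcal{N}}=\Sigma\widetilde W_{h+1:n}\widetilde W_{h+1:n}^\top$. Empirical covariance: $\Gamma_0=\frac1{J-1}\sum_j(v_0^{(j)}-\bar v_0)(v_0^{(j)}-\bar v_0)^\top$. *)

(* Defs.v *)
From mathcomp Require Import all_boot all_order all_algebra.
Set Implicit Arguments. Unset Strict Implicit. Unset Printing Implicit Defensive.
Import Order.TTheory GRing.Theory Num.Theory.
Local Open Scope ring_scope.

Section Defs.
Variable R : realFieldType.

Definition spd n (S : 'M[R]_n) : Prop :=
  S^T = S /\ forall x : 'cV[R]_n, x != 0 -> 0 < (x^T *m S *m x) 0 0.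

Definition ens_mean d J (v : 'I_J -> 'cV[R]_d) : 'cV[R]_d :=
  J%:R^-1 *: \sum_(j < J) v j.

Definition emp_cov d J (v : 'I_J -> 'cV[R]_d) : 'M[R]_d :=
  (J.-1)%:R^-1 *: \sum_(j < J) ((v j - ens_mean v) *m (v j - ens_mean v)^T).

Fixpoint Cseq n (S C0 : 'M[R]_n) (i : nat) : 'M[R]_n :=
  match i with
  | 0 => C0
  | i.+1 => S - S *m invmx (Cseq S C0 i + S) *m S
  end.

Definition Mseq n (S C0 : 'M[R]_n) (i : nat) : 'M[R]_n :=
  S *m invmx (Cseq S C0 i + S).

(* W_{k:l} W_{k:l}^T for the (0-indexed) column range k <= j < l of W,
   written as the sum of outer products of those columns. *)
Definition colblock_outer n (W : 'M[R]_n) (k l : nat) : 'M[R]_n :=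
  \sum_(j < n | (k <= j < l)%N) (col j W *m (col j W)^T).

Definition proj_blk n (S W : 'M[R]_n) (k l : nat) : 'M[R]_n :=
  S *m colblock_outer W k l.

End Defs.

(* Main.v *)
Require Import Defs.
From mathcomp Require Import all_boot all_order all_algebra.
From mathcomp Require Import zify lra.
Set Implicit Arguments. Unset Strict Implicit.
Import Order.TTheory GRing.Theory Num.Theory.
Local Open Scope ring_scope.

Lemma col_mulmx (R : realFieldType) m n p (A : 'M[R]_(m, n)) (B : 'M[R]_(n, p)) j :
  col j (A *m B) = A *m col j B.
Proof. by rewrite !colE mulmxA. Qed.

Lemma entry_quad (R : realFieldType) n (W C : 'M[R]_n) k :
  (W^T *m C *m W) k k = ((col k W)^T *m C *m col k W) 0 0.
Proof. by rewrite tr_col -row_mul -col_mulmx -row_mul !mxE. Qed.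

Lemma emp_cov_psd (R : realFieldType) d J (v : 'I_J -> 'cV[R]_d) (y : 'cV[R]_d) :
  0 <= (y^T *m emp_cov v *m y) 0 0.
Proof.
rewrite /emp_cov -scalemxAr -scalemxAl mxE mulr_ge0 ?invr_ge0 ?ler0n //.
rewrite mulmx_sumr mulmx_suml summxE sumr_ge0 // => j _.
set u := v j - ens_mean v.
have -> : y^T *m (u *m u^T) *m y = (y^T *m u) *m (y^T *m u)^T.
  by rewrite trmx_mul trmxK !mulmxA.
rewrite mxE sumr_ge0 // => l _; rewrite !mxE -expr2 sqr_ge0 //.
Qed.

Section Main.
Variables (R : realFieldType) (n : nat) (S W : 'M[R]_n).
Hypothesis WSW : W^T *m S *m W = 1%:M.

Definition F (a : 'rV[R]_n) := S *m W *m diag_mx a *m W^T.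

Lemma SWWT : S *m (W *m W^T) = 1%:M.
Proof.
have h1 : W *m (W^T *m S) = 1%:M by apply: mulmx1C; exact: WSW.
have h2 : (W *m W^T) *m S = 1%:M by rewrite -mulmxA.
exact: mulmx1C h2.
Qed.

Lemma FM a b : F a *m F b = F (\row_j (a 0 j * b 0 j)).
Proof.
rewrite /F -mulmx_diag.
have -> : S *m W *m diag_mx a *m W^T *m (S *m W *m diag_mx b *m W^T)
  = S *m W *m diag_mx a *m (W^T *m S *m W) *m diag_mx b *m W^T.
  by rewrite !mulmxA.
by rewrite WSW mulmx1 !mulmxA.
Qed.

Lemma F1 : F (const_mx 1) = 1%:M.
Proof. by rewrite /F diag_const_mx mulmx1 -mulmxA SWWT. Qed.

Lemma FD a b : F (a + b) = F a + F b.
Proof. by rewrite /F raddfD /= mulmxDr mulmxDl. Qed.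

Lemma WCW (C : 'M[R]_n) a : C *m W = S *m W *m diag_mx a ->
  W^T *m C *m W = diag_mx a.
Proof. by move=> hC; rewrite -mulmxA hC !mulmxA WSW mul1mx. Qed.

Lemma inv_form (C : 'M[R]_n) a : C *m W = S *m W *m diag_mx a ->
  (forall k, 0 <= a 0 k) ->
  invmx (C + S) = W *m diag_mx (\row_k (1 + a 0 k)^-1) *m W^T.
Proof.
move=> hC ha.
suff h : (C + S) *m (W *m diag_mx (\row_k (1 + a 0 k)^-1) *m W^T) = 1%:M.
  have [U _] := mulmx1_unit h.
  by rewrite -[invmx _]mulmx1 -h !mulmxA mulVmx // mul1mx.
have E1 : (C + S) *m W = S *m W *m diag_mx (a + const_mx 1).
  by rewrite mulmxDl hC raddfD /= diag_const_mx mulmxDr mulmx1.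
rewrite !mulmxA E1 -(mulmxA _ (diag_mx _)) mulmx_diag.
have -> : \row_j ((a + const_mx 1) 0 j * (\row_k (1 + a 0 k)^-1) 0 j)
   = const_mx 1 :> 'rV[R]_n.
  apply/rowP => j; rewrite !mxE addrC mulfV //.
  have := ha j => hj; apply: lt0r_neq0; lra.
by rewrite diag_const_mx mulmx1 -mulmxA SWWT.
Qed.

Definition ind (k l : nat) : 'rV[R]_n := \row_j ((k <= j < l)%N)%:R.

Lemma colblockE k l : proj_blk S W k l = F (ind k l).
Proof.
rewrite /proj_blk /F -!mulmxA; congr (S *m _).
apply/matrixP => a b; rewrite /colblock_outer summxE mulmxA mul_mx_diag mxE.
rewrite big_mkcond; apply: eq_bigr => j _; rewrite !mxE.
case: ifP => _; rewrite ?mulr1 ?mulr0 ?mul0r //.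
by rewrite big_ord1 !mxE.
Qed.

End Main.
Arguments ind {R n} k%_N l%_N.

Theorem proposition4p4 (R : realFieldType) (n d J h r : nat)
  (H : 'M[R]_(n, d)) (S : 'M[R]_n) (v : 'I_J -> 'cV[R]_d) (W : 'M[R]_n) :
  (1 < J)%N ->
  \rank H = h ->
  spd S ->
  (r <= h)%N ->
  let C0 := H *m emp_cov v *m H^T in
  (* W = [w_1, ..., w_n] is a basis, Sigma-orthonormal *)
  W \in unitmx ->
  W^T *m S *m W = 1%:M ->
  (* each w_k is a generalized eigenvector of (C_i, Sigma) for every i *)
  (forall (i : nat) (k : 'I_n), exists delta : R,
      Cseq S C0 i *m col k W = delta *: (S *m col k W)) ->
  (* w_1..w_r: in Ran(Sigma^{-1} H), positive eigenvalue for C_0 *)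
  (forall k : 'I_n, (k < r)%N ->
      (exists x : 'cV[R]_d, col k W = invmx S *m H *m x) /\
      (exists delta : R, 0 < delta /\ C0 *m col k W = delta *: (S *m col k W))) ->
  (* w_{r+1}..w_h: in Ran(Sigma^{-1} H), eigenvalue zero *)
  (forall k : 'I_n, (r <= k < h)%N ->
      (exists x : 'cV[R]_d, col k W = invmx S *m H *m x) /\
      C0 *m col k W = 0) ->
  (* w_{h+1}..w_n: in Ker(H^T), eigenvalue zero *)
  (forall k : 'I_n, (h <= k)%N ->
      H^T *m col k W = 0 /\ C0 *m col k W = 0) ->
  let P := proj_blk S W 0 r in
  let Q := proj_blk S W r h in
  let N := proj_blk S W h n in
  forall i : nat,
    let M := Mseq S C0 i in
    [/\ P *m M = M *m P, Q *m M = M *m Q & N *m M = M *m N] /\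
    [/\ P *m P = P, Q *m Q = Q & N *m N = N] /\
    [/\ P *m Q = 0, Q *m P = 0, P *m N = 0 & N *m P = 0] /\
    [/\ Q *m N = 0, N *m Q = 0 & P + Q + N = 1%:M].
Proof.
move=> _ _ _ hrh C0 _ WSW heig _ _ _ P Q N i M.
have form : forall i, exists a : 'rV[R]_n,
    Cseq S C0 i *m W = S *m W *m diag_mx a /\ forall k, 0 <= a 0 k.
  elim=> [|i' [a [ha hpos]]].
    have [f hf] := fin_all_exists (heig 0%N).
    have hC : Cseq S C0 0 *m W = S *m W *m diag_mx (\row_k f k).
      apply/matrixP => a b; rewrite mul_mx_diag mxE.
      have := congr1 (fun X : 'cV[R]_n => X a 0) (hf b).
      by rewrite -!col_mulmx !mxE => ->; rewrite mulrC.
    exists (\row_k f k); split => // k.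
    have hk : f k = ((col k W)^T *m C0 *m col k W) 0 0.
      by rewrite -entry_quad -[C0]/(Cseq S C0 0) (WCW WSW hC) !mxE eqxx mulr1n.
    rewrite mxE hk.
    have -> : (col k W)^T *m C0 *m col k W
       = (H^T *m col k W)^T *m emp_cov v *m (H^T *m col k W).
      by rewrite /C0 trmx_mul trmxK !mulmxA.
    exact: emp_cov_psd.
  exists (const_mx 1 - \row_k (1 + a 0 k)^-1); split.
    rewrite /= mulmxBl (inv_form WSW ha hpos).
    have -> : S *m (W *m diag_mx (\row_k (1 + a 0 k)^-1) *m W^T) *m S *m W
       = S *m W *m diag_mx (\row_k (1 + a 0 k)^-1) *m (W^T *m S *m W).
      by rewrite !mulmxA.
    by rewrite WSW mulmx1 raddfB /= diag_const_mx mulmxBr mulmx1.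
  move=> k; rewrite !mxE subr_ge0 invf_le1; have := hpos k => hk; lra.
have [a [ha hpos]] := form i.
have hM : M = F S W (\row_k (1 + a 0 k)^-1).
  by rewrite /M /Mseq (inv_form WSW ha hpos) /F !mulmxA.
have hP : P = F S W (ind 0 r) by rewrite /P colblockE.
have hQ : Q = F S W (ind r h) by rewrite /Q colblockE.
have hN : N = F S W (ind h n) by rewrite /N colblockE.
have comm : forall x y : 'rV[R]_n, F S W x *m F S W y = F S W y *m F S W x.
  move=> x y; rewrite !FM //; congr F; apply/rowP => j; rewrite !mxE mulrC //.
have idem : forall k l, F S W (ind k l) *m F S W (ind k l) = F S W (ind k l).
  move=> k l; rewrite FM //; congr F; apply/rowP => j; rewrite !mxE.
  by case: (_ && _); rewrite ?mulr1 ?mulr0.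
have Z : forall x y : 'rV[R]_n, (forall j, x 0 j * y 0 j = 0) ->
      F S W (\row_j (x 0 j * y 0 j)) = 0.
  move=> x y hxy; have -> : \row_j (x 0 j * y 0 j) = 0 :> 'rV[R]_n.
    by apply/rowP => j; rewrite !mxE hxy.
  by rewrite /F raddf0 mulmx0 mul0mx.
have bmul0 : forall b c : bool, (b && c) = false -> (b%:R * c%:R : R) = 0.
  by move=> [] [] //= _; rewrite ?mul0r ?mulr0.
have zero : forall k l k' l', (l <= k')%N ->
   F S W (ind k l) *m F S W (ind k' l') = 0 /\
   F S W (ind k' l') *m F S W (ind k l) = 0.
  move=> k l k' l' hl; rewrite !FM //.
  by split; apply: Z => j; rewrite !mxE; apply: bmul0; lia.
have [PQ QP] := zero 0%N r r h (leqnn r).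
have [PN NP] := zero 0%N r h n hrh.
have [QN NQ] := zero r h h n (leqnn h).
rewrite hM hP hQ hN; split; first by split; apply: comm.
split; first by split; apply: idem.
split; first by split.
split => //.
rewrite -!FD -(F1 WSW); congr F; apply/rowP => j; rewrite !mxE.
have := ltn_ord j => hj.
case E1: (0 <= j < r)%N; case E2: (r <= j < h)%N; case E3: (h <= j < n)%N;
  rewrite ?addr0 ?add0r //; exfalso; lia.
Qed.
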